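(* Let $p$ be a prime and let $G\le S_p$ with $p\mid|G|$. Then for every $1\ne g\in G$: (a) if $p\nmid|g|$ then $p\mid|G:C_G(g)|$; (b) if $p\mid|g|$ then $|C_G(g)|=p$; (c) if $|G:C_G(g)|<p$, then $G$ has a unique Sylow $p$-subgroup $P$ and $g\in P$; moreover, if $G\ne P$, then $G$ is a Frobenius group with kernel $P$ and a Frobenius complement of order $r$ dividing $p-1$, and in this case $P$ is the Frattini subgroup of $G$; (d) $|G:C_G(g)|\ne 2(p-1)$.
   Context: $|g|$ denotes the order of $g$.
   Formalization: In part (c), when G ≠ P, P is the Fitting subgroup of G in place of the Frattini subgroup of G. The statement above fails without it. *)

(* Defs.v *)
From mathcomp Require Import all_boot all_fingroup all_solvable.
Set Implicit Arguments.
Unset Strict Implicit.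
Unset Printing Implicit Defensive.

(* Main.v *)
Require Import Defs.
From mathcomp Require Import all_boot all_fingroup all_solvable zify.
Set Implicit Arguments. Unset Strict Implicit. Unset Printing Implicit Defensive.
Lemma ar (p n k : nat) : 5 <= p -> n %% p = 1 -> 2 * p.-1 = k * n -> n = 1.
Proof.
move=> p5 nm e.
have := divn_eq n p; rewrite nm => en.
move: e; rewrite en; set q := n %/ p.
case: q => [|q]; first by [].
move=> e; exfalso; case: k e => [|[|k]] e. lia. case: q e => [|q] e; lia. nia.
Qed.
Lemma ar2 (p c : nat) : 1 < c -> c * (2 * p.-1) <= p`! -> p = 2 \/ p = 3 -> False.
Proof. by move=> c1 le [] e; move: le; rewrite e !factS fact0 /=; lia. Qed.

Local Open Scope group_scope.

Lemma key p (x : 'S_p) : prime p -> #[x] = p -> 'C[x] \subset <[x]>.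
Proof.
move=> pp ox.
have cx : #|<[x]>| = p by rewrite -orderE.
have x1 : x != 1 by rewrite -order_eq1 ox; case: p pp {x ox cx} => [|[|]].
have [i xi] : exists i, x i != i.
  apply/existsP; apply: contraR x1 => /existsPn H.
  by apply/eqP/permP => j; rewrite perm1; apply/eqP; have := H j; rewrite negbK.
have hor : orbit 'P <[x]> i = setT.
  have d : #|orbit 'P <[x]> i| %| p by have := dvdn_indexg <[x]> 'C_<[x]>[i | 'P]; rewrite cx -card_orbit.
  have : 1 < #|orbit 'P <[x]> i|.
    rewrite (cardD1 i) orbit_refl /= ltnS lt0n; apply/existsP; exists (x i).
    by rewrite xi; exact: (mem_orbit 'P i (cycle_id x)).
  move=> lt1; apply/eqP; rewrite eqEcard subsetT cardsT card_ord.
  have ne : #|orbit 'P <[x]> i| != 1%N by case: #|_| lt1 => [|[|]].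
  by move/(prime_nt_dvdP pp ne): d => ->; rewrite leqnn.
have oP j : exists2 y, y \in <[x]> & j = y i.
  have : j \in orbit 'P <[x]> i by rewrite hor inE.
  by case/orbitP => y yx <-; exists y.
have sC : <[x]> \subset 'C[x] by rewrite -cent_cycle; apply: cycle_abelian.
apply/subsetP => c cC.
have [y yx ey] := oP (c i).
have dC : c * y^-1 \in 'C[x] by rewrite groupM ?groupV // (subsetP sC).
suff e1 : c * y^-1 = 1 by rewrite -(mulgKV y c) e1 mul1g.
apply/permP => k; rewrite perm1.
have [z zx ->] := oP k.
have czd : commute (c * y^-1) z.
  by move: dC; rewrite -cent_cycle => /centP; apply.
by rewrite -permM -czd permM permM ey permK.
Qed.

Lemma centp p (G : {group 'S_p}) g : prime p -> g \in G -> (p %| #[g])%N ->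
  'C_G[g] = <[g]> /\ #[g] = p.
Proof.
move=> pp gG dg.
set x := g ^+ (#[g] %/ p).
have ox : #[x] = p.
  rewrite orderXdiv ?dvdn_div //.
  have m0 : 0 < #[g] %/ p by rewrite divn_gt0 ?prime_gt0 // dvdn_leq.
  by rewrite -{1}(divnK dg) mulKn.
have sCx : 'C[g] \subset 'C[x].
  apply/subsetP => c cg; rewrite cent1C; apply: groupX; by rewrite cent1C.
have sgC : <[g]> \subset 'C[g] by rewrite -cent_cycle; apply: cycle_abelian.
have e : 'C[g] = <[g]>.
  apply/eqP; rewrite eqEsubset sgC andbT.
  exact: subset_trans sCx (subset_trans (key pp ox) (cycleX _ _)).
have e2 : <[x]> = <[g]>.
  apply/eqP; rewrite eqEsubset cycleX /= -e.
  exact: subset_trans sCx (key pp ox).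
split; last by rewrite orderE -e2 -orderE.
by rewrite -e; apply/setIidPr; rewrite e cycle_subG.
Qed.


Lemma partA p (G : {group 'S_p}) g : prime p -> (p %| #|G|)%N -> g \in G -> g != 1 ->
  ~~ (p %| #[g])%N -> (p %| #|G : 'C_G[g]|)%N.
Proof.
move=> pp pG gG g1 ndg.
have nC : ~~ (p %| #|'C_G[g]|)%N.
  apply/negP => /(Cauchy pp) [x xC ox].
  have gx : g \in <[x]>.
    by apply: (subsetP (key pp ox)); rewrite cent1C; case/setIP: xC.
  have : (#[g] %| p)%N by have := order_dvdG gx; rewrite -orderE ox.
  case/primeP: pp => _ H /H /orP[] /eqP e.
    by move: g1; rewrite -order_eq1 e.
  by move: ndg; rewrite e dvdnn.
move: pG; rewrite -(Lagrange (subsetIl G 'C[g])) Euclid_dvdM //.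
by rewrite (negbTE nC).
Qed.

Theorem lemma4p1 (p : nat) (G : {group 'S_p}) :
  prime p -> (p %| #|G|)%N ->
  forall g : 'S_p, g \in G -> g != 1 ->
  [/\ ~~ (p %| #[g])%N -> (p %| #|G : 'C_G[g]|)%N,
      (p %| #[g])%N -> #|'C_G[g]| = p,
      (#|G : 'C_G[g]| < p)%N ->
        exists P : {group 'S_p},
          [/\ 'Syl_p(G) = [set P], g \in P &
              G :!=: P ->
                (exists H : {group 'S_p},
                   [Frobenius G = P ><| H] /\ (#|H| %| p.-1)%N)
                /\ 'F(G) = P]
    & #|G : 'C_G[g]| != (2 * p.-1)%N].
Proof.
move=> pp pG g gG g1.
have hA := partA pp pG gG g1.
have hB : (p %| #[g])%N -> #|'C_G[g]| = p.
  by case/(centp pp gG) => -> og; exact: og.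
have cS : (#|G| <= p`!)%N by rewrite -card_Sn max_card.
have iC0 := indexg_gt0 G 'C_G[g].
split => //.
- move=> ilt.
  have dg : (p %| #[g])%N.
    apply: contraLR ilt => ndg; rewrite -leqNgt; exact: dvdn_leq iC0 (hA ndg).
  have [eC og] := centp pp gG dg.
  pose P := <[g]>%G.
  have sPG : P \subset G by rewrite cycle_subG.
  have cP : #|P| = p by exact: og.
  have iP : #|G : P| = #|G : 'C_G[g]| by rewrite eC.
  have sylP : p.-Sylow(G) P.
    rewrite /pHall sPG /pgroup cP pnat_id //= p'natE // iP.
    by apply/negP => /(dvdn_leq iC0); rewrite leqNgt ilt.
  have sCN : 'C_G[g] \subset 'N_G(P) by rewrite eC subsetI sPG normG.
  have nP : #|'Syl_p(G)| = 1%N.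
    have := card_Syl_mod G pp; rewrite (card_Syl sylP).
    have le : (#|G : 'N_G(P)| <= #|G : 'C_G[g]|)%N.
      rewrite -(Lagrange_index (subsetIl G 'N(P)) sCN) leq_pmulr //.
    by rewrite modn_small // (leq_ltn_trans le ilt).
  have [Q eQ] : exists Q, 'Syl_p(G) = [set Q] by apply/cards1P; rewrite nP.
  have PQ : P = Q by apply/set1P; rewrite -eQ inE sylP.
  exists P; split; [by rewrite eQ PQ | exact: cycle_id | move=> GP].
  have NG : 'N_G(P) = G.
    by apply: index1g (subsetIl _ _) _; rewrite -(card_Syl sylP) nP.
  have nsPG : P <| G by rewrite /normal sPG -NG subsetIr.
  have [H cH] := splitsP (SchurZassenhaus_split (pHall_Hall sylP) nsPG).
  have sdG : P ><| H = G by apply/(sdprod_normal_complP nsPG); rewrite -complgC.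
  have [_ mPH _ tiPH] := sdprodP sdG.
  have sHG : H \subset G by rewrite -mPH mulG_subr.
  have ntP : P :!=: 1 by rewrite trivg_card1 cP; case: p pp {pG cS hA hB ilt dg eC og cP iP sylP sCN nP eQ PQ NG nsPG cH sdG mPH tiPH GP g gG g1 iC0 P Q H sHG sPG G} => [|[|]].
  have ntH : H :!=: 1 by apply: contraNneq GP => H1; rewrite -mPH H1 mulg1.
  have frob : [Frobenius G = P ><| H].
    apply/(Frobenius_semiregularP sdG ntP ntH) => h /setD1P [h1 hH].
    apply: prime_TIg; first by rewrite cP.
    apply/negP => /subsetP /(_ g (cycle_id g)) gh.
    have hC : h \in 'C_G[g] by rewrite inE (subsetP sHG) //= cent1C.
    have : h \in P :&: H by rewrite inE hH andbT; rewrite eC in hC.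
    by rewrite tiPH inE (negbTE h1).
  split; first by exists H; split => //; have := Frobenius_dvd_ker1 frob; rewrite cP.
  have sPF : P \subset 'F(G).
    exact: Fitting_max nsPG (pgroup_nil (pHall_pgroup sylP)).
  apply/eqP; rewrite eqEsubset sPF andbT (sub_normal_Hall sylP nsPG (Fitting_sub G)).
  have dF := nilpotent_pcoreC p (Fitting_nil G).
  have [_ mF cF _] := dprodP dF.
  have sPO : P \subset 'O_p('F(G)).
    apply: pcore_max (pHall_pgroup sylP) _.
    exact: normalS sPF (Fitting_sub G) nsPG.
  have sOC : 'O_p^'('F(G)) \subset 'C_G[g].
    rewrite subsetI (subset_trans (pcore_sub _ _) (Fitting_sub G)) /= -cent_cycle.
    exact: subset_trans cF (centS sPO).
  have O1 : #|'O_p^'('F(G))| = 1%N.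
    apply: (@pnat_1 p); last exact: pcore_pgroup.
    by apply: pgroupS (pHall_pgroup sylP); rewrite /P /= -eC.
  by rewrite /pgroup -(dprod_card dF) O1 muln1; exact: pcore_pgroup.
apply/eqP => e.
have c1 : (1 < #|'C_G[g]|)%N.
  apply: leq_trans (subset_leq_card (_ : <[g]> \subset 'C_G[g])).
    by rewrite -orderE order_gt1.
  by rewrite cycle_subG inE gG cent1id.
have le : (#|'C_G[g]| * (2 * p.-1) <= p`!)%N.
  by rewrite -e Lagrange ?subsetIl.
have p1 := prime_gt1 pp.
have [p23|p5] : (p == 2) || (p == 3) \/ (5 <= p)%N.
- case: p pp {pG hA hB cS iC0 G e c1 le p1 g gG g1} => [|[|[|[|[|p]]]]] // _; by [left | right].
- by apply: (ar2 c1 le); case/orP: p23 => /eqP; [left|right].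
have ndi : ~~ (p %| 2 * p.-1)%N.
  rewrite Euclid_dvdM // dvdn_prime2 //; apply/norP; split.
    by apply/eqP => p2; move: p5; rewrite p2.
  apply/negP => d; have h0 : (0 < p.-1)%N by lia.
  by have := dvdn_leq h0 d; lia.
have dg : (p %| #[g])%N by apply: contraR ndi => ndg; rewrite -e hA.
have [eC og] := centp pp gG dg.
pose P := <[g]>%G.
have sPG : P \subset G by rewrite cycle_subG.
have cP : #|P| = p by exact: og.
have iP : #|G : P| = #|G : 'C_G[g]| by rewrite eC.
have sylP : p.-Sylow(G) P.
  by rewrite /pHall sPG /pgroup cP pnat_id //= p'natE // iP e.
have sCN : 'C_G[g] \subset 'N_G(P) by rewrite eC subsetI sPG normG.
have nP : #|G : 'N_G(P)| = 1%N.
  have := card_Syl_mod G pp; rewrite (card_Syl sylP) => m.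
  have /dvdnP [k ek] : (#|G : 'N_G(P)| %| 2 * p.-1)%N.
    by rewrite -e -(Lagrange_index (subsetIl G 'N(P)) sCN) dvdn_mulr.
  exact: ar p5 m ek.
have NG : 'N_G(P) = G by apply: index1g (subsetIl _ _) nP.
have nGP : G \subset 'N(P) by rewrite -NG subsetIr.
have : (#|g ^: G| <= #|P :\ 1%g|)%N.
  apply: subset_leq_card; apply/subsetP => _ /imsetP [h hG ->].
  rewrite !inE conjg_eq1 g1 /= memJ_norm ?cycle_id //; exact: (subsetP nGP).
rewrite -index_cent1 e.
have := cardsD1 1%g P; rewrite group1 cP add1n.
set m := #|P^#|; lia.
Qed.
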